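(* For every integer $x\ge3$, the number $\frac{x^2(x^2+4)}{5x^2-4}$ is not an integer. *)

(* Defs.v *)
From Stdlib Require Import ZArith.

(* Main.v *)
Require Import Defs.
From Stdlib Require Import ZArith Lia.
Open Scope Z_scope.

Theorem mainTheorem16 (x : Z) (hx : 3 <= x) :
  ~ (5 * x ^ 2 - 4 | x ^ 2 * (x ^ 2 + 4))%Z.
Proof.
  intro H.
  assert (H2 : (5 * x ^ 2 - 4 | 96)).
  { replace 96 with (25 * (x ^ 2 * (x ^ 2 + 4)) - (5 * x ^ 2 - 4) * (5 * x ^ 2 + 24)) by ring.
    apply Z.divide_sub_r.
    - apply Z.divide_mul_r; exact H.
    - apply Z.divide_mul_l; apply Z.divide_refl. }
  assert (Hle : 5 * x ^ 2 - 4 <= 96) by (apply Z.divide_pos_le; [lia|exact H2]).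
  assert (x = 3 \/ x = 4) as [-> | ->] by nia;
  apply Z.mod_divide in H2; try (compute in H2; discriminate); compute; discriminate.
Qed.
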